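(* Let $n\ge2$, $m\ge1$, $\lambda_0\ne0$, $\lambda_1>0$, $\lambda_2\ge0$, $\omega\in\mathbb{R}$, and run a PIFO algorithm with initial point $x_0=0$ and sampling probabilities $(p_1,\dots,p_n)$ on the components $f_i=r_i(\cdot;\lambda_0,\lambda_1,\lambda_2,m,\omega)$, $i=1,\dots,n$. Define $T_0=0$ and, for $k\ge1$, $T_k=\min\{t:t>T_{k-1},\ i_t\equiv k\pmod n\}$. Then for every $1\le k\le m$ and every $t<T_k$ we have $x_t\in\mathcal{F}_{k-1}$. Moreover, for every $k\ge1$, $T_k=\sum_{l=1}^kY_l$ where $Y_1,\dots,Y_k$ are independent and $Y_l$ is geometrically distributed with success probability $q_l=p_{l'}$, where $l'\in\{1,\dots,n\}$ and $l'\equiv l\pmod n$ (a geometric variable with success probability $0$ is $+\infty$ almost surely).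
   Context: For $\omega\in\mathbb{R}$, $B(m,\omega)\in\mathbb{R}^{m\times m}$ is the matrix whose row $l$, for $1\le l\le m-1$, has entry $-1$ in column $m-l$ and entry $1$ in column $m-l+1$, and whose row $m$ is $\omega e_1^\top$; $b_l(m,\omega)^\top$ is its $l$-th row. $\mathcal{L}_i=\{l:1\le l\le m,\ l\equiv i-1\pmod n\}$. $r_1(x)=\lambda_1\sum_{l\in\mathcal{L}_1}(b_l(m,\omega)^\top x)^2+\lambda_2\|x\|_2^2-\lambda_0\langle e_m,x\rangle$ and $r_i(x)=\lambda_1\sum_{l\in\mathcal{L}_i}(b_l(m,\omega)^\top x)^2+\lambda_2\|x\|_2^2$ for $i\ge2$, $x\in\mathbb{R}^m$. $\mathcal{F}_0=\{0\}$, $\mathcal{F}_k=\mathrm{span}\{e_m,\dots,e_{m-k+1}\}$. A random variable $Y$ is geometric with success probability $p$ if $\mathbb{P}(Y=s)=(1-p)^{s-1}p$ for $s=1,2,\dots$. For $\gamma>0$, $\mathrm{prox}^{\gamma}_g(x)=\arg\min_u\{g(u)+\frac{1}{2\gamma}\|x-u\|_2^2\}$. PIFO algorithm: a probability vector $(p_1,\dots,p_n)$, initial point $x_0$, parameters $\gamma_t>0$; indices $i_1,i_2,\dots$ drawn independently with $\mathbb{P}(i_t=j)=p_j$; iterates $x_t\in\mathrm{span}\{x_0,\dots,x_{t-1},\nabla f_{i_1}(x_0),\dots,\nabla f_{i_t}(x_{t-1}),\mathrm{prox}^{\gamma_1}_{f_{i_1}}(x_0),\dots,\mathrm{prox}^{\gamma_t}_{f_{i_t}}(x_{t-1})\}$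 for $t\ge1$. *)

(* Defs.v *)
From Stdlib Require Import Reals Lra Lia Arith List ClassicalEpsilon.
Open Scope R_scope.

(* Vectors of R^m are represented as functions nat -> R; only the
   coordinates 1..m are meaningful (everything below only looks at them). *)

Fixpoint sumR (n : nat) (f : nat -> R) : R :=
  match n with O => 0 | S n' => sumR n' f + f n end.

Fixpoint prodR (n : nat) (f : nat -> R) : R :=
  match n with O => 1 | S n' => prodR n' f * f n end.

Fixpoint sumN (n : nat) (s : nat -> nat) : nat :=
  match n with O => O | S n' => (sumN n' s + s n)%nat end.

(* b_l(m,omega)^T x : row l of B(m,omega) applied to x, for 1 <= l <= m.
   Rows l < m: -1 in column m-l, +1 in column m-l+1; row m: omega e_1^T. *)
Definition bdot (m : nat) (omega : R) (l : nat) (x : nat -> R) : R :=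
  if Nat.ltb l m then x (m - l + 1)%nat - x (m - l)%nat else omega * x 1%nat.

(* r_i(x; lam0, lam1, lam2, m, omega); L_i = {l in 1..m | l = i-1 mod n}. *)
Definition r (n m : nat) (omega lam0 lam1 lam2 : R) (i : nat) (x : nat -> R) : R :=
  lam1 * sumR m (fun l => if Nat.eqb (l mod n) ((i - 1) mod n)
                          then (bdot m omega l x) ^ 2 else 0)
  + lam2 * sumR m (fun j => x j ^ 2)
  - (if Nat.eqb i 1 then lam0 * x m else 0).

Definition normsq (m : nat) (v : nat -> R) : R := sumR m (fun j => v j ^ 2).

Definition is_grad (m : nat) (f : (nat -> R) -> R) (x g : nat -> R) : Prop :=
  forall j, (1 <= j <= m)%nat ->
    derivable_pt_lim (fun s => f (fun k => if Nat.eqb k j then x k + s else x k)) 0 (g j).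

Definition is_prox (m : nat) (f : (nat -> R) -> R) (gam : R) (x u : nat -> R) : Prop :=
  forall v : nat -> R,
    f u + / (2 * gam) * normsq m (fun j => x j - u j)
    <= f v + / (2 * gam) * normsq m (fun j => x j - v j).

(* v lies in span{x_0..x_{t-1}, G_1..G_t, P_1..P_t} (in R^m) *)
Definition in_span (m t : nat) (x G P : nat -> nat -> R) (v : nat -> R) : Prop :=
  exists a b c : nat -> R, forall j, (1 <= j <= m)%nat ->
    v j = sumR t (fun s => a s * x (s - 1)%nat j + b s * G s j + c s * P s j).

(* x in F_k = span{e_m, ..., e_{m-k+1}} (for k <= m) *)
Definition inF (m k : nat) (x : nat -> R) : Prop :=
  forall j, (1 <= j <= m - k)%nat -> x j = 0.

(* IsT i n k T : the hitting time T_k (defined from the index sequence i)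
   is finite and equals T.  T_0 = 0,
   T_k = min{ t > T_{k-1} | i_t = k mod n }. *)
Inductive IsT (i : nat -> nat) (n : nat) : nat -> nat -> Prop :=
| IsT0 : IsT i n 0 0
| IsTS : forall k T T', IsT i n k T -> (T < T')%nat ->
    (i T' mod n = S k mod n)%nat ->
    (forall t, (T < t < T')%nat -> (i t mod n <> S k mod n)%nat) ->
    IsT i n (S k) T'.

(* q_l = p_{l'}, l' in 1..n, l' = l mod n (for l >= 1) *)
Definition q (n : nat) (p : nat -> R) (l : nat) : R := p (S ((l - 1) mod n)).

Definition indic (P : Prop) : R :=
  if excluded_middle_informative P then 1 else 0.

(* index sequence t |-> i_t (t >= 1) determined by a finite word *)
Definition seq_of (w : list nat) : nat -> nat := fun t => nth (t - 1) w 1%nat.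

(* sum over all words (i_1,...,i_N) in {1..n}^N of p_{i_1}...p_{i_N} F(word) *)
Fixpoint wsum (n : nat) (p : nat -> R) (N : nat) (F : list nat -> R) : R :=
  match N with
  | O => F nil
  | S N' => sumR n (fun j => p j * wsum n p N' (fun w => F (j :: w)))
  end.

(* Probability, for i_1, i_2, ... i.i.d. with P(i_t = j) = p_j, of an event E
   on index sequences that depends only on (i_1, ..., i_N). *)
Definition prob_prefix (n : nat) (p : nat -> R) (N : nat)
  (E : (nat -> nat) -> Prop) : R :=
  wsum n p N (fun w => indic (E (seq_of w))).

(* Main.v *)
Require Import Defs.
From Stdlib Require Import Reals.
From Stdlib Require Import Lra Lia Arith List Classical ClassicalEpsilon FunctionalExtensionality.
Open Scope R_scope.

Lemma sumR_ext_range (N : nat) (f g : nat -> R) :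
  (forall j, (1 <= j <= N)%nat -> f j = g j) -> sumR N f = sumR N g.
Proof.
  induction N; intros H; simpl; [reflexivity|].
  rewrite IHN by (intros; apply H; lia). rewrite H by lia. reflexivity.
Qed.

Lemma sumR_le_range (N : nat) (f g : nat -> R) :
  (forall j, (1 <= j <= N)%nat -> f j <= g j) -> sumR N f <= sumR N g.
Proof.
  induction N; intros H; simpl; [lra|].
  assert (sumR N f <= sumR N g) by (apply IHN; intros; apply H; lia).
  assert (f (S N) <= g (S N)) by (apply H; lia). lra.
Qed.

Lemma sumR_nonneg (N : nat) (f : nat -> R) :
  (forall j, (1 <= j <= N)%nat -> 0 <= f j) -> 0 <= sumR N f.
Proof.
  induction N; intros H; simpl; [lra|].
  assert (0 <= sumR N f) by (apply IHN; intros; apply H; lia).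
  assert (0 <= f (S N)) by (apply H; lia). lra.
Qed.

Lemma sumR_nonneg_zero (N : nat) (f : nat -> R) :
  (forall j, (1 <= j <= N)%nat -> 0 <= f j) -> sumR N f <= 0 ->
  forall j, (1 <= j <= N)%nat -> f j = 0.
Proof.
  induction N; intros H Hs j Hj; [lia|]. simpl in Hs.
  assert (0 <= sumR N f) by (apply sumR_nonneg; intros; apply H; lia).
  assert (0 <= f (S N)) by (apply H; lia).
  destruct (Nat.eq_dec j (S N)) as [->|Hne]; [lra|].
  apply IHN; [intros; apply H; lia| lra | lia].
Qed.

Lemma modS_char (n a : nat) : (2 <= n)%nat ->
  (S a mod n = S (a mod n) \/ (S (a mod n) = n /\ S a mod n = 0))%nat.
Proof.
  intros Hn. replace (S a) with (a + 1)%nat by lia.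
  rewrite Nat.Div0.add_mod. rewrite (Nat.mod_1_l n) by lia.
  assert (a mod n < n)%nat by (apply Nat.mod_upper_bound; lia).
  destruct (Nat.eq_dec (a mod n + 1) n) as [E|E].
  - right. rewrite E. split; [lia|]. apply Nat.Div0.mod_same.
  - left. rewrite Nat.mod_small by lia. lia.
Qed.

Lemma eqmod_S (n a b : nat) : (2 <= n)%nat ->
  (S a mod n = S b mod n)%nat -> (a mod n = b mod n)%nat.
Proof.
  intros Hn H.
  assert (a mod n < n)%nat by (apply Nat.mod_upper_bound; lia).
  assert (b mod n < n)%nat by (apply Nat.mod_upper_bound; lia).
  destruct (modS_char n a Hn); destruct (modS_char n b Hn); lia.
Qed.

Lemma eqmod_S' (n a b : nat) : (2 <= n)%nat ->
  (a mod n = b mod n)%nat -> (S a mod n = S b mod n)%nat.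
Proof.
  intros Hn H.
  assert (S a mod n < n)%nat by (apply Nat.mod_upper_bound; lia).
  assert (S b mod n < n)%nat by (apply Nat.mod_upper_bound; lia).
  destruct (modS_char n a Hn); destruct (modS_char n b Hn); lia.
Qed.

Lemma mod_S_neq (n a : nat) : (2 <= n)%nat -> (a mod n <> S a mod n)%nat.
Proof.
  intros Hn H.
  assert (a mod n < n)%nat by (apply Nat.mod_upper_bound; lia).
  destruct (modS_char n a Hn); lia.
Qed.

Definition Sc (d : nat) (c : R) (v : nat -> R) : nat -> R :=
  fun j => if andb (Nat.leb 1 j) (Nat.leb j d) then c * v j else v j.

Lemma bdot_Sc (m d l : nat) (omega c : R) (v : nat -> R) :
  (1 <= l <= m)%nat -> ((l < m)%nat -> (l + d <> m)%nat) ->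
  bdot m omega l (Sc d c v) = bdot m omega l v \/
  bdot m omega l (Sc d c v) = c * bdot m omega l v.
Proof.
  intros Hl Hd. unfold bdot, Sc.
  destruct (Nat.ltb_spec l m);
  repeat match goal with |- context [Nat.leb ?a ?b] => destruct (Nat.leb_spec a b) end;
  simpl; first [ left; ring | right; ring | exfalso; lia ].
Qed.

Lemma r_Sc (n m d : nat) (omega lam0 lam1 lam2 c : R) (i : nat) (v : nat -> R) :
  0 <= lam1 -> 0 <= lam2 -> c * c <= 1 ->
  (forall l, (1 <= l < m)%nat -> (l mod n = (i - 1) mod n)%nat -> (l + d <> m)%nat) ->
  (i = 1%nat -> (d < m)%nat) ->
  r n m omega lam0 lam1 lam2 i (Sc d c v) <= r n m omega lam0 lam1 lam2 i v.
Proof.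
  intros H1 H2 Hc Hl H0. unfold r.
  assert (A : sumR m (fun l => if Nat.eqb (l mod n) ((i - 1) mod n)
                          then (bdot m omega l (Sc d c v)) ^ 2 else 0)
    <= sumR m (fun l => if Nat.eqb (l mod n) ((i - 1) mod n)
                          then (bdot m omega l v) ^ 2 else 0)).
  { apply sumR_le_range. intros l Hl'.
    destruct (Nat.eqb_spec (l mod n) ((i-1) mod n)) as [E|E]; [|lra].
    destruct (bdot_Sc m d l omega c v Hl') as [B|B].
    - intros. apply (Hl l); [lia|exact E].
    - rewrite B. lra.
    - rewrite B. set (b := bdot m omega l v). 
      assert (0 <= b*b) by nra. nra. }
  assert (B : sumR m (fun j => Sc d c v j ^ 2) <= sumR m (fun j => v j ^ 2)).
  { apply sumR_le_range. intros j _. unfold Sc.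
    destruct (andb _ _); [|lra]. set (b := v j). assert (0 <= b*b) by nra. nra. }
  assert (C : (if Nat.eqb i 1 then lam0 * Sc d c v m else 0) =
              (if Nat.eqb i 1 then lam0 * v m else 0)).
  { destruct (Nat.eqb_spec i 1); [|reflexivity].
    specialize (H0 e). unfold Sc.
    destruct (Nat.leb_spec m d); [lia|]. rewrite Bool.andb_false_r. reflexivity. }
  rewrite C.
  assert (lam1 * sumR m (fun l => if Nat.eqb (l mod n) ((i - 1) mod n)
                          then (bdot m omega l (Sc d c v)) ^ 2 else 0)
    <= lam1 * sumR m (fun l => if Nat.eqb (l mod n) ((i - 1) mod n)
                          then (bdot m omega l v) ^ 2 else 0)) by
    (apply Rmult_le_compat_l; assumption).
  assert (lam2 * sumR m (fun j => Sc d c v j ^ 2) <= lam2 * sumR m (fun j => v j ^ 2)) by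
    (apply Rmult_le_compat_l; assumption).
  lra.
Qed.

Section GP.
Variables (n m d : nat) (omega lam0 lam1 lam2 : R) (i : nat).
Hypothesis H1 : 0 <= lam1.
Hypothesis H2 : 0 <= lam2.
Hypothesis Hl : forall l, (1 <= l < m)%nat -> (l mod n = (i - 1) mod n)%nat -> (l + d <> m)%nat.
Hypothesis H0 : i = 1%nat -> (d < m)%nat.
Hypothesis Hdm : (d <= m)%nat.

Let f := r n m omega lam0 lam1 lam2 i.

Lemma grad_zero (x g : nat -> R) :
  (forall j, (1 <= j <= d)%nat -> x j = 0) ->
  is_grad m f x g -> forall j, (1 <= j <= d)%nat -> g j = 0.
Proof.
  intros Hx Hg j Hj.
  specialize (Hg j ltac:(lia)).
  set (phi := fun s => f (fun k => if Nat.eqb k j then x k + s else x k)) in *.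
  assert (Ev : forall s, phi (- s) = phi s).
  { intro s. unfold phi.
    set (y := fun k => if Nat.eqb k j then x k + s else x k).
    assert (E : (fun k => if Nat.eqb k j then x k + - s else x k) = Sc d (-1) y).
    { apply functional_extensionality. intro k. unfold Sc, y.
      destruct (Nat.eqb_spec k j) as [->|Hkj].
      - destruct (Nat.leb_spec 1 j); destruct (Nat.leb_spec j d); try lia. simpl.
        rewrite (Hx j Hj). ring.
      - destruct (Nat.leb_spec 1 k); destruct (Nat.leb_spec k d); simpl; try ring.
        rewrite (Hx k ltac:(lia)). ring. }
    assert (E2 : y = Sc d (-1) (Sc d (-1) y)).
    { apply functional_extensionality. intro k. unfold Sc.
      destruct (andb _ _); ring. }
    rewrite E.
    assert (Hc : -1 * -1 <= 1) by lra.
    pose proof (r_Sc n m d omega lam0 lam1 lam2 (-1) i y H1 H2 Hc Hl H0).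
    pose proof (r_Sc n m d omega lam0 lam1 lam2 (-1) i (Sc d (-1) y) H1 H2 Hc Hl H0).
    rewrite <- E2 in H3. unfold f. lra. }
  assert (Hopp : derivable_pt_lim (opp_fct id) 0 (-1)) by
    (apply derivable_pt_lim_opp; apply derivable_pt_lim_id).
  assert (Hg' : derivable_pt_lim phi (opp_fct id 0) (g j)) by
    (unfold opp_fct, id; rewrite Ropp_0; exact Hg).
  pose proof (derivable_pt_lim_comp _ _ _ _ _ Hopp Hg') as Hc.
  assert (Ecomp : comp phi (opp_fct id) = phi).
  { apply functional_extensionality. intro s. unfold comp, opp_fct, id. apply Ev. }
  rewrite Ecomp in Hc.
  pose proof (uniqueness_limite _ _ _ _ Hg Hc). lra.
Qed.

Lemma prox_zero (gam : R) (x u : nat -> R) :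
  0 < gam ->
  (forall j, (1 <= j <= d)%nat -> x j = 0) ->
  is_prox m f gam x u -> forall j, (1 <= j <= d)%nat -> u j = 0.
Proof.
  intros Hgam Hx Hp.
  specialize (Hp (Sc d 0 u)).
  assert (Hc : 0 * 0 <= 1) by lra.
  pose proof (r_Sc n m d omega lam0 lam1 lam2 0 i u H1 H2 Hc Hl H0) as Hr.
  set (D := fun j => if andb (Nat.leb 1 j) (Nat.leb j d) then u j ^ 2 else 0).
  assert (EN : normsq m (fun j => x j - u j) =
               normsq m (fun j => x j - Sc d 0 u j) + sumR m D).
  { unfold normsq.
    assert (forall a b : nat -> R, sumR m (fun j => a j + b j) = sumR m a + sumR m b) as SA.
    { intros a b. clear. induction m as [|m0 IH]; simpl; [ring|]. rewrite IH. ring. }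
    rewrite <- SA. apply sumR_ext_range. intros j Hj. unfold Sc, D.
    destruct (Nat.leb_spec 1 j); destruct (Nat.leb_spec j d); simpl; try ring.
    rewrite (Hx j ltac:(lia)). ring. }
  assert (Hk : 0 < / (2 * gam)) by (apply Rinv_0_lt_compat; lra).
  assert (Hs : sumR m D <= 0).
  { unfold f in *. rewrite EN in Hp.
    assert (/ (2 * gam) * sumR m D <= 0) by nra.
    destruct (Rle_or_lt (sumR m D) 0); [assumption|]. nra. }
  assert (HD : forall j, (1 <= j <= m)%nat -> 0 <= D j).
  { intros j _. unfold D. destruct (andb _ _); [|lra]. set (b := u j). nra. }
  intros j Hj.
  pose proof (sumR_nonneg_zero m D HD Hs j ltac:(lia)) as Z.
  unfold D in Z. destruct (Nat.leb_spec 1 j); destruct (Nat.leb_spec j d); try lia.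
  simpl in Z. set (b := u j) in *. nra.
Qed.
End GP.

Lemma hit_exists (i : nat -> nat) (n K T : nat) :
  IsT i n K T -> forall s, (T < s)%nat -> (i s mod n = S K mod n)%nat ->
  exists T', (T' <= s)%nat /\ IsT i n (S K) T'.
Proof.
  intros HT s. induction s as [s IH] using lt_wf_ind. intros Hs Hi.
  destruct (classic (exists t, (T < t < s)%nat /\ (i t mod n = S K mod n)%nat))
    as [[t [Ht Hti]]|Hno].
  - destruct (IH t ltac:(lia) ltac:(lia) Hti) as [T' [HT' HI]].
    exists T'. split; [lia|exact HI].
  - exists s. split; [lia|]. apply (IsTS i n K T s HT Hs Hi).
    intros t Ht E. apply Hno. exists t. split; assumption.
Qed.

Lemma part1 (n m : nat) (lam0 lam1 lam2 omega : R) :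
  (2 <= n)%nat -> (1 <= m)%nat -> 0 < lam1 -> 0 <= lam2 ->
  (forall (i : nat -> nat) (gam : nat -> R) (x G P : nat -> nat -> R),
     (forall t, (1 <= t)%nat -> (1 <= i t <= n)%nat) ->
     (forall t, (1 <= t)%nat -> 0 < gam t) ->
     (forall j, (1 <= j <= m)%nat -> x 0%nat j = 0) ->
     (forall t, (1 <= t)%nat ->
        is_grad m (r n m omega lam0 lam1 lam2 (i t)) (x (t - 1)%nat) (G t)) ->
     (forall t, (1 <= t)%nat ->
        is_prox m (r n m omega lam0 lam1 lam2 (i t)) (gam t) (x (t - 1)%nat) (P t)) ->
     (forall t, (1 <= t)%nat -> in_span m t x G P (x t)) ->
     forall k t : nat, (1 <= k <= m)%nat ->
       (forall T, IsT i n k T -> (t < T)%nat) ->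
       inF m (k - 1) (x t)).
Proof.
  intros Hn Hm Hl1 Hl2 i gam x G P Hi Hgam Hx0 HG HP Hsp k t.
  revert k. induction t as [t IH] using lt_wf_ind. intros k Hk HT.
  destruct t as [|t0].
  { intros j Hj. apply Hx0. lia. }
  set (t := S t0) in *.
  assert (Hgen : forall s, (1 <= s <= t)%nat -> forall j, (1 <= j <= m - (k-1))%nat ->
            x (s - 1)%nat j = 0 /\ G s j = 0 /\ P s j = 0).
  { intros s Hs.
    assert (Hxs : inF m (k - 1) (x (s - 1)%nat)).
    { apply IH; [lia|lia|]. intros T HT'. specialize (HT T HT'). lia. }
    destruct (Nat.eq_dec (i s mod n) (k mod n)) as [Ek|Nk].
    - (* i_s = k mod n: need F_{k-2} *)
      destruct (Nat.eq_dec k 1) as [->|Hk1].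
      { exfalso. destruct (hit_exists i n 0 0 (IsT0 i n) s ltac:(lia) Ek) as [T' [HT1 HT2]].
        specialize (HT T' HT2). lia. }
      assert (Hxs2 : inF m (k - 1 - 1) (x (s - 1)%nat)).
      { apply IH; [lia|lia|]. intros T HT'.
        destruct (Nat.lt_ge_cases (s-1) T) as [|Hle]; [assumption|exfalso].
        replace (k - 1)%nat with (pred k) in HT' by lia.
        assert (Ek' : (i s mod n = S (pred k) mod n)%nat) by (replace (S (pred k)) with k by lia; exact Ek).
        destruct (hit_exists i n (pred k) T HT' s ltac:(lia) Ek') as [T' [HT1 HT2]].
        replace (S (pred k)) with k in HT2 by lia.
        specialize (HT T' HT2). lia. }
      set (d := (m - (k - 1 - 1))%nat).
      assert (Hl : forall l, (1 <= l < m)%nat -> (l mod n = (i s - 1) mod n)%nat -> (l + d <> m)%nat).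
      { intros l Hl E Hd. assert (l = k - 2)%nat by (unfold d in Hd; lia). subst l.
        pose proof (Hi s ltac:(lia)).
        apply eqmod_S' in E; [|lia].
        replace (S (k-2)) with (k-1)%nat in E by lia.
        replace (S (i s - 1)) with (i s) in E by lia.
        apply (mod_S_neq n (k-1) Hn). replace (S (k-1)) with k by lia. congruence. }
      assert (H0 : i s = 1%nat -> (d < m)%nat).
      { intros E1. unfold d. destruct (Nat.eq_dec k 2) as [->|]; [|lia].
        exfalso. rewrite E1 in Ek. apply (mod_S_neq n 1 Hn). exact Ek. }
      assert (Hdm : (d <= m)%nat) by (unfold d; lia).
      intros j Hj. split; [apply Hxs; exact Hj|].
      assert (Hj' : (1 <= j <= d)%nat) by (unfold d; lia).
      split.
      + apply (grad_zero n m d omega lam0 lam1 lam2 (i s) ltac:(lra) Hl2 Hl H0 Hdm (x (s-1)%nat) (G s));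
          [ intros; apply Hxs2; unfold d in *; lia | apply HG; lia | exact Hj'].
      + apply (prox_zero n m d omega lam0 lam1 lam2 (i s) ltac:(lra) Hl2 Hl H0 Hdm (gam s) (x (s-1)%nat) (P s));
          [ apply Hgam; lia | intros; apply Hxs2; unfold d in *; lia | apply HP; lia | exact Hj'].
    - set (d := (m - (k - 1))%nat).
      assert (Hl : forall l, (1 <= l < m)%nat -> (l mod n = (i s - 1) mod n)%nat -> (l + d <> m)%nat).
      { intros l Hl E Hd. assert (l = k - 1)%nat by (unfold d in Hd; lia). subst l.
        pose proof (Hi s ltac:(lia)).
        apply eqmod_S' in E; [|lia].
        replace (S (k-1)) with k in E by lia.
        replace (S (i s - 1)) with (i s) in E by lia. congruence. }
      assert (H0 : i s = 1%nat -> (d < m)%nat).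
      { intros E1. unfold d. destruct (Nat.eq_dec k 1) as [->|]; [|lia].
        exfalso. apply Nk. rewrite E1. reflexivity. }
      assert (Hdm : (d <= m)%nat) by (unfold d; lia).
      intros j Hj. split; [apply Hxs; exact Hj|].
      assert (Hj' : (1 <= j <= d)%nat) by (unfold d; lia).
      split.
      + apply (grad_zero n m d omega lam0 lam1 lam2 (i s) ltac:(lra) Hl2 Hl H0 Hdm (x (s-1)%nat) (G s));
          [ intros; apply Hxs; unfold d in *; lia | apply HG; lia | exact Hj'].
      + apply (prox_zero n m d omega lam0 lam1 lam2 (i s) ltac:(lra) Hl2 Hl H0 Hdm (gam s) (x (s-1)%nat) (P s));
          [ apply Hgam; lia | intros; apply Hxs; unfold d in *; lia | apply HP; lia | exact Hj']. }
  intros j Hj.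
  destruct (Hsp t ltac:(unfold t; lia)) as [a [b [c Hs]]].
  rewrite (Hs j ltac:(lia)).
  transitivity (sumR t (fun _ => 0)).
  - apply sumR_ext_range. intros s Hs'.
    destruct (Hgen s Hs' j Hj) as [E1 [E2 E3]]. rewrite E1, E2, E3. ring.
  - clear. induction t; simpl; [reflexivity|]. rewrite IHt. ring.
Qed.

Lemma sumR_scal (N : nat) (c : R) (f : nat -> R) :
  sumR N (fun j => c * f j) = c * sumR N f.
Proof. induction N; simpl; [ring|]. rewrite IHN. ring. Qed.

Lemma sumR_minus (N : nat) (f g : nat -> R) :
  sumR N (fun j => f j - g j) = sumR N f - sumR N g.
Proof. induction N; simpl; [ring|]. rewrite IHN. ring. Qed.

Lemma indic_ext (A B : Prop) : (A <-> B) -> indic A = indic B.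
Proof.
  intros H. unfold indic.
  destruct (excluded_middle_informative A); destruct (excluded_middle_informative B);
  tauto.
Qed.

Lemma indic_and (A B : Prop) : indic (A /\ B) = indic A * indic B.
Proof.
  unfold indic.
  destruct (excluded_middle_informative (A /\ B)); destruct (excluded_middle_informative A);
  destruct (excluded_middle_informative B); try tauto; ring.
Qed.

Lemma indic_not (A : Prop) : indic (~ A) = 1 - indic A.
Proof.
  unfold indic.
  destruct (excluded_middle_informative (~A)); destruct (excluded_middle_informative A);
  try tauto; ring.
Qed.

Lemma sumR_indic_eq (N c : nat) (p : nat -> R) : (1 <= c <= N)%nat ->
  sumR N (fun j => p j * indic (j = c)) = p c.
Proof.
  induction N; intros Hc; [lia|]. simpl.
  destruct (Nat.eq_dec c (S N)) as [->|Hne].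
  - assert (sumR N (fun j => p j * indic (j = S N)) = 0).
    { transitivity (sumR N (fun _ => 0)).
      - apply sumR_ext_range. intros j Hj. unfold indic.
        destruct (excluded_middle_informative (j = S N)); [lia|ring].
      - clear. induction N; simpl; [reflexivity|]. rewrite IHN. ring. }
    rewrite H. unfold indic. destruct (excluded_middle_informative (S N = S N)); [ring|tauto].
  - rewrite IHN by lia. unfold indic.
    destruct (excluded_middle_informative (S N = c)); [lia|ring].
Qed.

Section W.
Variables (n : nat) (p : nat -> R).

Lemma wsum_ext_len (N : nat) (F G : list nat -> R) :
  (forall w, length w = N -> (forall y, In y w -> (1 <= y <= n)%nat) -> F w = G w) ->
  wsum n p N F = wsum n p N G.
Proof.
  revert F G. induction N; intros F G H; simpl.
  - apply H; [reflexivity| intros y []].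
  - apply sumR_ext_range. intros j Hj. f_equal. apply IHN.
    intros w Hw Hy. apply H; [simpl; lia|]. intros y [<-|Hy']; [lia|auto].
Qed.

Lemma wsum_app (N1 N2 : nat) (F : list nat -> R) :
  wsum n p (N1 + N2) F = wsum n p N1 (fun w1 => wsum n p N2 (fun w2 => F (w1 ++ w2))).
Proof.
  revert F. induction N1; intros F; simpl; [reflexivity|].
  apply sumR_ext_range. intros j _. rewrite IHN1. reflexivity.
Qed.

Lemma wsum_scal (N : nat) (c : R) (F : list nat -> R) :
  wsum n p N (fun w => c * F w) = c * wsum n p N F.
Proof.
  revert F. induction N; intros F; simpl; [reflexivity|].
  rewrite <- sumR_scal. apply sumR_ext_range. intros j _.
  rewrite (IHN (fun w => F (j :: w))). ring.
Qed.

Lemma wsum_S (N : nat) (F : list nat -> R) :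
  wsum n p (S N) F = sumR n (fun j => p j * wsum n p N (fun w => F (j :: w))).
Proof. reflexivity. Qed.

Definition Blk (H : nat -> Prop) (s : nat) (w : list nat) : Prop :=
  (forall u, (1 <= u < s)%nat -> ~ H (nth (u - 1) w 1%nat)) /\ H (nth (s - 1) w 1%nat).

Lemma geom (H : nat -> Prop) (c : nat) :
  (1 <= c <= n)%nat -> sumR n p = 1 ->
  (forall j, (1 <= j <= n)%nat -> (H j <-> j = c)) ->
  forall s, (1 <= s)%nat ->
  wsum n p s (fun w => indic (Blk H s w)) = (1 - p c) ^ (s - 1) * p c.
Proof.
  intros Hc Hsum HH s Hs.
  assert (S1 : sumR n (fun j => p j * indic (H j)) = p c).
  { rewrite <- (sumR_indic_eq n c p Hc). apply sumR_ext_range. intros j Hj.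
    rewrite (indic_ext _ _ (HH j Hj)). reflexivity. }
  assert (S2 : sumR n (fun j => p j * indic (~ H j)) = 1 - p c).
  { rewrite <- Hsum, <- S1, <- sumR_minus. apply sumR_ext_range. intros j _.
    rewrite indic_not. ring. }
  induction s as [|s IH]; [lia|].
  destruct s as [|s].
  - simpl. rewrite Rmult_1_l, <- S1. apply sumR_ext_range. intros j _. f_equal.
    apply indic_ext. unfold Blk. simpl. split; [tauto|]. intros Hj; split; [intros; lia|exact Hj].
  - rewrite wsum_S.
    transitivity (sumR n (fun j => p j * indic (~ H j)) * ((1 - p c) ^ (S s - 1) * p c)).
    + rewrite <- IH by lia. rewrite Rmult_comm, <- sumR_scal. apply sumR_ext_range. intros j _.
      idtac.
      assert (E : wsum n p (S s) (fun w => indic (Blk H (S (S s)) (j :: w))) =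
                  wsum n p (S s) (fun w => indic (~ H j) * indic (Blk H (S s) w))).
      { apply wsum_ext_len. intros w _ _. rewrite <- indic_and. apply indic_ext.
        unfold Blk. split.
        - intros [A B]. split.
          + specialize (A 1%nat ltac:(lia)). simpl in A. exact A.
          + split.
            * intros u Hu. specialize (A (S u) ltac:(lia)).
              replace (S u - 1)%nat with (S (u - 1)) in A by lia. simpl in A. exact A.
            * replace (S (S s) - 1)%nat with (S (S s - 1)) in B by lia. exact B.
        - intros [A [B C]]. split.
          + intros u Hu. destruct u as [|u]; [lia|]. destruct u as [|u]; [exact A|].
            specialize (B (S u) ltac:(lia)). replace (S (S u) - 1)%nat with (S (S u - 1)) by lia.
            exact B.
          + replace (S (S s) - 1)%nat with (S (S s - 1)) by lia. exact C. }
      rewrite E, wsum_scal. ring.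
    + rewrite S2. replace (S (S s) - 1)%nat with (S (S s - 1)) by lia. simpl. ring.
Qed.
End W.

Lemma IsT_local (i i' : nat -> nat) (n l T : nat) :
  IsT i n l T -> (forall t, (1 <= t <= T)%nat -> i t = i' t) -> IsT i' n l T.
Proof.
  induction 1 as [|k T T' HT IH Hlt Hh Hno]; intros Heq; [constructor|].
  apply IsTS with T.
  - apply IH. intros; apply Heq; lia.
  - exact Hlt.
  - rewrite <- Heq by lia. exact Hh.
  - intros t Ht. rewrite <- Heq by lia. apply Hno. exact Ht.
Qed.

Lemma IsT_fun (i : nat -> nat) (n l T : nat) :
  IsT i n l T -> forall T2, IsT i n l T2 -> T = T2.
Proof.
  induction 1 as [|k T T' HT IH Hlt Hh Hno]; intros T2 H2.
  - inversion H2; reflexivity.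
  - inversion H2 as [|k' T0 T'' HT0 Hlt0 Hh0 Hno0]; subst.
    pose proof (IH _ HT0); subst T0.
    destruct (Nat.lt_total T' T2) as [L|[E|L]]; [|exact E|].
    + exfalso. apply (Hno0 T'); [lia|exact Hh].
    + exfalso. apply (Hno T2); [lia|exact Hh0].
Qed.

Lemma sumN_mono (s : nat -> nat) (l k : nat) : (l <= k)%nat -> (sumN l s <= sumN k s)%nat.
Proof. induction k; intros H; [assert (l = 0)%nat by lia; subst; lia|].
  destruct (Nat.eq_dec l (S k)) as [->|]; [lia|]. simpl. specialize (IHk ltac:(lia)). lia. Qed.

Lemma part2 (n : nat) (p : nat -> R) :
  (2 <= n)%nat -> sumR n p = 1 ->
  forall (k : nat) (s : nat -> nat),
     (forall l, (1 <= l <= k)%nat -> (1 <= s l)%nat) ->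
     prob_prefix n p (sumN k s)
       (fun i => forall l, (1 <= l <= k)%nat -> IsT i n l (sumN l s))
     = prodR k (fun l => (1 - q n p l) ^ (s l - 1) * q n p l).
Proof.
  intros Hn Hsum k s. induction k as [|k IH]; intros Hs.
  - unfold prob_prefix. simpl. unfold indic.
    destruct (excluded_middle_informative _) as [|C]; [reflexivity|].
    exfalso. apply C. intros; lia.
  - unfold prob_prefix in *. simpl sumN. simpl prodR.
    rewrite wsum_app.
    set (N := sumN k s). set (sk := s (S k)).
    set (H := fun j : nat => (j mod n = S k mod n)%nat).
    set (c := S (k mod n)).
    assert (Hc : (1 <= c <= n)%nat) by (unfold c; pose proof (Nat.mod_upper_bound k n ltac:(lia)); lia).
    assert (HH : forall j, (1 <= j <= n)%nat -> (H j <-> j = c)).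
    { intros j Hj. unfold H, c. split.
      - intros E. replace j with (S (j - 1)) in E by lia. apply eqmod_S in E; [|lia].
        rewrite (Nat.mod_small (j-1)) in E by lia. lia.
      - intros ->. apply eqmod_S'; [lia|]. rewrite Nat.Div0.mod_mod; lia. }
    assert (Hsk : (1 <= sk)%nat) by (apply Hs; lia).
    pose proof (geom n p H c Hc Hsum HH sk Hsk) as G.
    transitivity (wsum n p N (fun w1 => ((1 - p c) ^ (sk - 1) * p c) *
                      indic (forall l, (1 <= l <= k)%nat -> IsT (seq_of w1) n l (sumN l s)))).
    + apply wsum_ext_len. intros w1 Hw1 _.
      rewrite <- G, Rmult_comm, <- wsum_scal. apply wsum_ext_len. intros w2 Hw2 _.
      rewrite <- indic_and. apply indic_ext.
      set (i := seq_of (w1 ++ w2)). set (i1 := seq_of w1).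
      assert (Ei : forall t, (1 <= t <= N)%nat -> i t = i1 t).
      { intros t Ht. unfold i, i1, seq_of. apply app_nth1. lia. }
      assert (Ei2 : forall u, (1 <= u)%nat -> i (N + u)%nat = nth (u - 1) w2 1%nat).
      { intros u Hu. unfold i, seq_of. rewrite app_nth2 by lia. f_equal. lia. }
      assert (Ek : forall l, (1 <= l <= k)%nat ->
                 (IsT i n l (sumN l s) <-> IsT i1 n l (sumN l s))).
      { intros l Hl. pose proof (sumN_mono s l k ltac:(lia)). fold N in H0.
        split; intros HT; eapply IsT_local; try exact HT; intros t Ht;
          [apply Ei| symmetry; apply Ei]; lia. }
      assert (HkN : (forall l, (1 <= l <= k)%nat -> IsT i n l (sumN l s)) -> IsT i n k N).
      { intros A. destruct k as [|k']; [constructor|]. apply A; lia. }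
      split.
      * intros A.
        assert (A' : forall l, (1 <= l <= k)%nat -> IsT i n l (sumN l s)) by (intros; apply A; lia).
        split; [intros l Hl; apply Ek; [exact Hl| apply A; lia]|].
        specialize (A (S k) ltac:(lia)). simpl sumN in A. fold N sk in A.
        inversion A as [|k0 T T' HT Hlt Hh Hno]; subst.
        pose proof (IsT_fun _ _ _ _ HT _ (HkN A')) as ET. subst T.
        unfold Blk, H. split.
        -- intros u Hu. rewrite <- Ei2 by lia. apply Hno. lia.
        -- rewrite <- Ei2 by lia. exact Hh.
      * intros [A [B1 B2]].
        assert (A' : forall l, (1 <= l <= k)%nat -> IsT i n l (sumN l s))
          by (intros l Hl; apply Ek; [exact Hl| apply A; exact Hl]).
        intros l Hl. destruct (Nat.eq_dec l (S k)) as [->|Hne]; [|apply A'; lia].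
        simpl sumN. fold N sk.
        apply IsTS with N; [apply HkN; exact A'|lia| |].
        -- replace (N + sk)%nat with (N + sk)%nat by lia. rewrite Ei2 by lia. exact B2.
        -- intros t Ht. replace t with (N + (t - N))%nat by lia. rewrite Ei2 by lia.
           apply B1. lia.
    + rewrite wsum_scal. unfold N. rewrite IH by (intros; apply Hs; lia).
      unfold q. replace (S k - 1)%nat with k by lia. fold c sk. ring.
Qed.

Theorem corollary2p3 (n m : nat) (lam0 lam1 lam2 omega : R) (p : nat -> R) :
  (2 <= n)%nat -> (1 <= m)%nat -> lam0 <> 0 -> 0 < lam1 -> 0 <= lam2 ->
  (forall j, (1 <= j <= n)%nat -> 0 <= p j) -> sumR n p = 1 ->
  (forall (i : nat -> nat) (gam : nat -> R) (x G P : nat -> nat -> R),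
     (forall t, (1 <= t)%nat -> (1 <= i t <= n)%nat) ->
     (forall t, (1 <= t)%nat -> 0 < gam t) ->
     (forall j, (1 <= j <= m)%nat -> x 0%nat j = 0) ->
     (forall t, (1 <= t)%nat ->
        is_grad m (r n m omega lam0 lam1 lam2 (i t)) (x (t - 1)%nat) (G t)) ->
     (forall t, (1 <= t)%nat ->
        is_prox m (r n m omega lam0 lam1 lam2 (i t)) (gam t) (x (t - 1)%nat) (P t)) ->
     (forall t, (1 <= t)%nat -> in_span m t x G P (x t)) ->
     forall k t : nat, (1 <= k <= m)%nat ->
       (forall T, IsT i n k T -> (t < T)%nat) ->
       inF m (k - 1) (x t))
  /\
  (forall (k : nat) (s : nat -> nat), (1 <= k)%nat ->
     (forall l, (1 <= l <= k)%nat -> (1 <= s l)%nat) ->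
     prob_prefix n p (sumN k s)
       (fun i => forall l, (1 <= l <= k)%nat -> IsT i n l (sumN l s))
     = prodR k (fun l => (1 - q n p l) ^ (s l - 1) * q n p l)).
Proof.
  intros Hn Hm Hl0 Hl1 Hl2 Hp Hsum. split.
  - apply part1; assumption.
  - intros k s _ Hs. apply part2; assumption.
Qed.
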